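(* Let $X=X(\Delta)$ be a nonsingular toric variety of dimension $n$ with tangent bundle $T_X$. Then $T_X$ splits (i.e. is $T$-equivariantly isomorphic to a direct sum of toric line bundles) if and only if for every $n$-dimensional cone $\sigma\in\Delta(n)$ and every ray $\rho\in\Delta(1)\setminus\sigma(1)$, the primitive ray generator $v_\rho$ of $\rho$ is the negative of some primitive ray generator of $\sigma$.
   Context: $\Delta(1)$ denotes the set of rays of the fan $\Delta$, $\Delta(n)$ the set of $n$-dimensional cones, and $\sigma(1)$ the set of rays of a cone $\sigma$. The tangent bundle $T_X$ carries its natural torus-equivariant structure; in Klyachko's description it corresponds to $E=N_{\mathbb{C}}$ with filtrations $E^{\rho}(i)=N_{\mathbb{C}}$ for $i\le 0$, $E^{\rho}(1)=\mathrm{Span}(v_\rho)$, $E^{\rho}(i)=0$ for $i>1$.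
   Formalization: The equivalence is stated only for fans Δ with at least one n-dimensional cone, that is with Δ(n) ≠ ∅. The statement above fails without it. *)

(* Defs.v *)
From HB Require Import structures.
From mathcomp Require Import all_boot all_order all_algebra.
Set Implicit Arguments. Unset Strict Implicit. Unset Printing Implicit Defensive.
Import Order.TTheory GRing.Theory Num.Theory.
Local Open Scope ring_scope.

(* Rays of the fan are indexed
   by a finite type I, ray rho having primitive generator v rho.  A cone of a
   nonsingular fan is determined by its set of rays sigma(1) : {set I}; the
   fan Delta is the set D : {set {set I}} of these ray sets. *)

Section Fan.
Variables (n : nat) (I : finType) (v : I -> 'rV[int]_n).

Definition vQ (i : I) : 'rV[rat]_n := map_mx (fun z : int => z%:~R) (v i).

Definition cone (S : {set I}) (x : 'rV[rat]_n) : Prop :=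
  exists c : I -> rat, (forall i, 0 <= c i) /\ (forall i, i \notin S -> c i = 0)
    /\ x = \sum_i c i *: vQ i.

Definition primitive (w : 'rV[int]_n) : Prop :=
  forall (k : int) (u : 'rV[int]_n), w = k *: u -> k = 1 \/ k = -1.

Definition unimodular (S : {set I}) : Prop :=
  exists B : 'M[int]_n, (\det B = 1 \/ \det B = -1) /\
    exists f : I -> 'I_n, {in S &, injective f} /\
      forall i, i \in S -> row (f i) B = v i.

Definition smooth_fan (D : {set {set I}}) : Prop :=
  [/\ injective v /\ (forall i, primitive (v i)),
      forall i, [set i] \in D,
      forall S T : {set I}, S \in D -> T \subset S -> T \in D,
      forall S : {set I}, S \in D -> unimodular S &
      forall S T : {set I}, S \in D -> T \in D ->
        forall x, cone S x -> cone T x -> cone (S :&: T) x].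

(* Klyachko data of T_X: E = N_C, E^rho(i) = N_C (i<=0), Span(v_rho) (i=1),
   0 (i>1); subspaces are row spaces of square matrices (%MS). *)
Definition tangent_filt (C : numClosedFieldType) (rho : I) (i : int) : 'M[C]_n :=
  if i <= 0 then 1%:M
  else if i == 1 then (<< map_mx (fun z : int => z%:~R) (v rho) >>)%MS
  else 0.

(* Klyachko data of a direct sum of r toric line bundles L_1,...,L_r, where
   L_j has filtrations L_j^rho(i) = C for i <= a j rho and 0 for i > a j rho:
   E = C^r, E^rho(i) = span of the e_j with i <= a j rho. *)
Definition linesum_filt (C : numClosedFieldType) (r : nat) (a : 'I_r -> I -> int)
  (rho : I) (i : int) : 'M[C]_r :=
  diag_mx (\row_(j < r) ((i <= a j rho)%R)%:R).

(* T_X splits: it is isomorphic (as filtered vector spaces, i.e. as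
   T-equivariant bundles via Klyachko) to a direct sum of toric line bundles. *)
Definition tangent_splits (C : numClosedFieldType) : Prop :=
  exists (r : nat) (a : 'I_r -> I -> int) (A : 'M[C]_(n, r)),
    [/\ row_free A, row_full A &
        forall rho i, (tangent_filt C rho i *m A == linesum_filt C a rho i)%MS].

End Fan.

(* Main.v *)
Require Import Defs.
From HB Require Import structures.
From mathcomp Require Import all_boot all_order all_algebra.
From mathcomp Require Import zify.
Import Order.TTheory GRing.Theory Num.Theory.
Local Open Scope ring_scope.

Set Implicit Arguments. Unset Strict Implicit.
Section Proofs.
Variables (C : numClosedFieldType) (n : nat) (I : finType) (v : I -> 'rV[int]_n).

Local Notation phi := (fun z : int => (z%:~R : C)).
Local Notation vC rho := (map_mx phi (v rho)).

Lemma mapC_inj m p (A B : 'M[int]_(m, p)) : map_mx phi A = map_mx phi B -> A = B.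
Proof.
move=> h; apply/matrixP => i j; move/matrixP: h => /(_ i j); rewrite !mxE.
exact: intr_inj.
Qed.

Lemma prim_neq0 (w : 'rV[int]_n) : primitive w -> w != 0.
Proof.
move=> hp; apply/eqP => w0; have := hp 2 w; rewrite w0 scaler0.
by case=> // /eqP.
Qed.

Lemma mul11 r (x : 'M[C]_(1, 1)) (w : 'M[C]_(1, r)) : x *m w = x 0 0 *: w.
Proof.
apply/matrixP => i j; rewrite !mxE big_ord1 (ord1 i).
by [].
Qed.

Lemma line_coord r (a : 'I_r -> I -> int) (A : 'M[C]_(n, r)) rho k :
  (<<vC rho>> *m A == linesum_filt C a rho 1)%MS ->
  (vC rho *m A) 0 k != 0 -> exists al, vC rho *m A = al *: 'e_k.
Proof.
move=> /andP [h1 h2] wk.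
rewrite (eqmxMr _ (genmxE _)) in h1; rewrite (eqmxMr _ (genmxE _)) in h2.
move/submxP: h1 => [D1 hD1]; move/submxP: h2 => [D2 hD2].
rewrite /linesum_filt mul_mx_diag in hD1.
have dk : (1 <= a k rho).
  move: wk; rewrite hD1 !mxE; case: (1 <= a k rho) => //.
  by rewrite mulr0 eqxx.
have := congr1 (row k) hD2; rewrite /linesum_filt row_diag_mx row_mul mul11 !mxE dk scale1r => he.
have c0 : D2 k 0 != 0.
  apply/eqP => c0; move: he; rewrite c0 scale0r => /matrixP /(_ 0 k).
  by rewrite !mxE !eqxx /= => /eqP; rewrite oner_eq0.
exists (D2 k 0)^-1; by rewrite he scalerA mulVf // scale1r.
Qed.

Lemma fsurj (f : I -> 'I_n) (s : {set I}) :
  {in s &, injective f} -> #|s| = n -> forall k : 'I_n, exists2 i, i \in s & f i = k.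
Proof.
move=> finj cs.
have fs : f @: s = setT.
  by apply/eqP; rewrite eqEcard subsetT cardsT card_ord /= (card_in_imset finj) cs leqnn.
move=> k; have : k \in f @: s by rewrite fs inE.
by case/imsetP => i hi ->; exists i.
Qed.

Lemma forward r (a : 'I_r -> I -> int) (A : 'M[C]_(n, r)) (s : {set I}) :
  injective v -> (forall i, primitive (v i)) -> unimodular v s -> #|s| = n ->
  row_free A ->
  (forall rho, (<<vC rho>> *m A == linesum_filt C a rho 1)%MS) ->
  forall rho, rho \notin s -> exists rho', rho' \in s /\ v rho = - v rho'.
Proof.
move=> vinj vprim [B [detB [f [finj fB]]]] cs Afree hf rho rhos.
have fs : forall k : 'I_n, exists2 i, i \in s & f i = k by exact: fsurj finj cs.
have Bu : B \in unitmx.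
  by rewrite unitmxE; case: detB => ->; rewrite ?unitrN1 ?unitr1.
have vC0 : vC rho != 0.
  apply/eqP => h; move/eqP: (prim_neq0 (vprim rho)); apply; apply: mapC_inj.
  by rewrite h; apply/matrixP => p q; rewrite !mxE.
have w0 : vC rho *m A != 0 by rewrite mulmx_free_eq0.
have [j wj] : exists j, (vC rho *m A) 0 j != 0.
  case: (pickP (fun j => (vC rho *m A) 0 j != 0)) => [j hj|h]; first by exists j.
  case/negP: w0; apply/eqP/matrixP => p q; rewrite (ord1 p) [RHS]mxE.
  by move: (h q) => /negbFE/eqP.
set BC := map_mx phi B.
have BCu : BC \in unitmx.
  rewrite unitmxE (det_map_mx (intr : {rmorphism int -> C})).
  by case: detB => ->; rewrite ?rmorphN1 ?rmorph1 ?unitrN1 ?unitr1.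
have [k hk] : exists k, (BC *m A) k j != 0.
  case: (pickP (fun k => (BC *m A) k j != 0)) => [k hk|h]; first by exists k.
  case/negP: wj; rewrite -(mulmxKV BCu (vC rho)).
  set x := (vC rho *m invmx BC); rewrite -mulmxA.
  rewrite [X in X == 0]mxE big1 // => l _.
  by move: (h l) => /negbFE/eqP ->; rewrite mulr0.
have [i his fik] := fs k.
have wi : (vC i *m A) 0 j != 0.
  have -> : vC i = row k BC.
    by apply/matrixP => p q; rewrite !mxE -fik -(fB i his) mxE.
  by rewrite -row_mul mxE.
have [al hal] := line_coord (hf rho) wj.
have [be hbe] := line_coord (hf i) wi.
have be0 : be != 0.
  by apply/eqP => be0; move: wi; rewrite hbe be0 scale0r mxE eqxx.
have eq1 : vC rho = (al / be) *: vC i.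
  apply: (row_free_inj Afree) => /=.
  by rewrite -scalemxAl hal hbe scalerA divfK.
set Y := invmx B.
have hY : v i *m Y = 'e_(f i) by rewrite -(fB i his) -row_mul mulmxV // row1.
set t := (v rho *m Y) 0 (f i).
have tE : al / be = t%:~R.
  have h := congr1 (fun M => (M *m map_mx phi Y) 0 (f i)) eq1.
  simpl in h.
  rewrite -scalemxAl -!(map_mxM (intr : {rmorphism int -> C})) hY in h.
  rewrite (map_delta_mx (intr : {rmorphism int -> C})) in h.
  have e1 : (map_mx phi (v rho *m Y)) 0 (f i) = t%:~R by rewrite mxE.
  rewrite e1 in h; move: h; rewrite !mxE !eqxx /= mulr1n mulr1 => ->.
  by [].
have eq2 : v rho = t *: v i.
  apply: mapC_inj.
  by rewrite (map_mxZ (intr : {rmorphism int -> C})) eq1 tE.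
case: (vprim rho t (v i) eq2) => ht.
  by move: eq2; rewrite ht scale1r => /vinj rhoi; move: rhos; rewrite rhoi his.
by exists i; split => //; rewrite eq2 ht scaleN1r.
Qed.

Lemma backward (s : {set I}) :
  unimodular v s -> #|s| = n ->
  (forall rho, rho \notin s -> exists rho', rho' \in s /\ v rho = - v rho') ->
  tangent_splits v C.
Proof.
move=> [B [detB [f [finj fB]]]] cs H.
have Bu : B \in unitmx.
  by rewrite unitmxE; case: detB => ->; rewrite ?unitrN1 ?unitr1.
set BC := map_mx phi B.
have BCu : BC \in unitmx.
  rewrite unitmxE (det_map_mx (intr : {rmorphism int -> C})).
  by case: detB => ->; rewrite ?rmorphN1 ?rmorph1 ?unitrN1 ?unitr1.
have hrow : forall rho, exists k, v rho = row k B \/ v rho = - row k B.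
  move=> rho; case: (boolP (rho \in s)) => hs.
    by exists (f rho); left; rewrite fB.
  have [r' [hr' e]] := H rho hs; exists (f r'); right; by rewrite fB.
have rE : forall l, row l B *m invmx B = 'e_l.
  by move=> l; rewrite -row_mul mulmxV // row1.
pose a : 'I_n -> I -> int :=
  fun k rho => ((v rho == row k B) || (v rho == - row k B))%:R.
exists n, a, (invmx BC); split.
- by rewrite row_free_unit unitmx_inv.
- by rewrite row_full_unit unitmx_inv.
move=> rho i; have [k hk] := hrow rho.
have key : forall l, (v rho == row l B) || (v rho == - row l B) = (l == k).
  move=> l; apply/idP/eqP => [hl|->]; last by case: hk => ->; rewrite eqxx ?orbT.
  apply/eqP; apply: contraT => nlk.
  have x0 : (v rho *m invmx B) 0 l = 0.
    by case: hk => ->; rewrite ?mulNmx rE !mxE (negbTE nlk) /= ?oppr0.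
  move: x0; case/orP: hl => /eqP ->; rewrite ?mulNmx rE !mxE !eqxx //.
have aE : forall l, a l rho = (l == k)%:R by move=> l; rewrite /a key.
rewrite /tangent_filt /linesum_filt.
case: (lerP i 0) => hi0.
  have -> : diag_mx (\row_j ((i <= a j rho)%R%:R : C)) = 1%:M.
    apply/matrixP => p q; rewrite !mxE aE.
    by rewrite (le_trans hi0 (ler0n _ _)).
  rewrite mul1mx; apply/andP; split; first exact: submx1.
  by rewrite sub1mx row_full_unit unitmx_inv.
case: eqP => [->|ni1].
  have -> : diag_mx (\row_j ((1 <= a j rho)%R%:R : C)) = delta_mx k k.
    apply/matrixP => p q; rewrite !mxE aE.
    case: (p =P k) => [->|/eqP/negbTE nk]; case: (q =P k) => [->|/eqP/negbTE nq]; rewrite ?eqxx ?nk ?nq /=.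
    all: rewrite ?(eq_sym k) ?nq ?mulr1n ?mulr0n ?mul0rn //.
  have hw : vC rho *m invmx BC = 'e_k \/ vC rho *m invmx BC = - 'e_k.
    have rC : row k BC *m invmx BC = 'e_k by rewrite -row_mul mulmxV // row1.
    have mr : map_mx phi (row k B) = row k BC by apply/matrixP => p q; rewrite !mxE.
    case: hk => ->; [left | right]; rewrite ?(map_mxN (intr : {rmorphism int -> C})) mr ?mulNmx rC //.
  have ed : (('e_k : 'rV[C]_n) == (delta_mx k k : 'M[C]_n))%MS.
    apply/andP; split; apply/submxP.
      by exists (delta_mx 0 k); rewrite mul_delta_mx.
    by exists (delta_mx k 0); rewrite mul_delta_mx.
  case/andP: ed => ed1 ed2.
  by case: hw => hw; apply/andP; split; rewrite (eqmxMr _ (genmxE _)) hw ?eqmx_opp.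
have -> : diag_mx (\row_j ((i <= a j rho)%R%:R : C)) = 0.
  apply/matrixP => p q; rewrite !mxE aE.
  have -> : (i <= (p == k)%:R) = false.
    case: (p == k); apply/negbTE; rewrite -ltNge /=; move: ni1 hi0; lia.
  by rewrite mul0rn.
rewrite mul0mx; apply/andP; split; exact: submx_refl.
Qed.

End Proofs.
Unset Implicit Arguments.


Theorem proposition2p6 (C : numClosedFieldType) (n : nat) (I : finType)
  (v : I -> 'rV[int]_n) (D : {set {set I}}) :
  smooth_fan v D ->
  (exists s, s \in D /\ #|s| = n) ->
  (tangent_splits v C <->
   (forall s, s \in D -> #|s| = n ->
      forall rho, rho \notin s -> exists rho', rho' \in s /\ v rho = - v rho')).
Proof.
move=> [[vinj vprim] _ _ huni _] [s0 [s0D cs0]]; split.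
  move=> [r [a [A [Afree _ hf]]]] s sD cs rho rhos.
  apply: (forward (a := a) (A := A) vinj vprim (huni _ sD) cs Afree _ rhos).
  by move=> rho'; have := hf rho' 1; rewrite /tangent_filt ler10 eqxx.
move=> H; apply: (@backward C n I v s0 (huni _ s0D) cs0) => rho rhos.
exact: H s0 s0D cs0 rho rhos.
Qed.
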